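(* Let $\|\cdot\|$ be a $C^2$ and strictly convex norm on $\mathbb{R}^2$, let $\alpha_0\in(0,\pi/2]$ be defined by $\sin(\alpha_0)=\inf_{x\in\partial B_{\|\cdot\|}(0,1)}\langle\nu_x,x/|x|\rangle$, and let $\gamma:I\to\mathbb{R}^2$ be a $\|\cdot\|$-self-contracted curve on an interval $I\subset\mathbb{R}$. Then for all $s\leq t\leq u$ in $I$, setting $x_0=\gamma(s)$, $y=\gamma(t)$, $y'=\gamma(u)$, and assuming $y\neq x_0$ and $y'\neq x_0$, $$\Big\langle\frac{y-x_0}{|y-x_0|},\frac{y'-x_0}{|y'-x_0|}\Big\rangle\geq-\cos(\alpha_0).$$
   Context: $\langle\cdot,\cdot\rangle$ and $|\cdot|$ are the Euclidean inner product and norm on $\mathbb{R}^2$. The norm $\|\cdot\|$ is $C^2$ on $\mathbb{R}^2\setminus\{0\}$ and its unit sphere $\partial B_{\|\cdot\|}(0,1)=\{\|x\|=1\}$ is a $C^2$ curve of strictly positive curvature. For $x$ on the unit sphere, $\nu_x$ is the outer Euclidean unit normal to the unit sphere at $x$. A curve $\gamma:I\to\mathbb{R}^2$ (not necessarily continuous) is $\|\cdot\|$-self-contracted if for every $[a,b]\subset I$ the function $t\mapsto\|\gamma(t)-\gamma(b)\|$ is non-increasing on $[a,b]$. *)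

(* Defs.v *)
From Stdlib Require Import Reals.
From Coquelicot Require Import Coquelicot.
Open Scope R_scope.

Definition R2 := (R * R)%type.

Definition vsub (x y : R2) : R2 := (fst x - fst y, snd x - snd y).
Definition vadd (x y : R2) : R2 := (fst x + fst y, snd x + snd y).
Definition vscal (a : R) (x : R2) : R2 := (a * fst x, a * snd x).

Definition ip (x y : R2) : R := fst x * fst y + snd x * snd y.
Definition enorm (x : R2) : R := sqrt (ip x x).

Definition is_norm (N : R2 -> R) : Prop :=
  (forall x, 0 <= N x) /\
  (forall x, N x = 0 -> x = (0, 0)) /\
  (forall a x, N (vscal a x) = Rabs a * N x) /\
  (forall x y, N (vadd x y) <= N x + N y).

Definition d1 (f : R2 -> R) (p : R2) : R := Derive (fun t => f (t, snd p)) (fst p).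
Definition d2 (f : R2 -> R) (p : R2) : R := Derive (fun t => f (fst p, t)) (snd p).

Definition C2_off0 (f : R2 -> R) : Prop :=
  forall p : R2, p <> (0, 0) ->
    ex_derive (fun t => f (t, snd p)) (fst p) /\
    ex_derive (fun t => f (fst p, t)) (snd p) /\
    ex_derive (fun t => d1 f (t, snd p)) (fst p) /\
    ex_derive (fun t => d1 f (fst p, t)) (snd p) /\
    ex_derive (fun t => d2 f (t, snd p)) (fst p) /\
    ex_derive (fun t => d2 f (fst p, t)) (snd p) /\
    continuous f p /\ continuous (d1 f) p /\ continuous (d2 f) p /\
    continuous (d1 (d1 f)) p /\ continuous (d2 (d1 f)) p /\
    continuous (d1 (d2 f)) p /\ continuous (d2 (d2 f)) p.

Definition grad (f : R2 -> R) (p : R2) : R2 := (d1 f p, d2 f p).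

Definition nu (N : R2 -> R) (x : R2) : R2 := vscal (/ enorm (grad N x)) (grad N x).

(* curvature (w.r.t. the outer normal) of the level curve {N = 1} at x,
   standard formula for the curvature of an implicitly defined curve *)
Definition curv (N : R2 -> R) (x : R2) : R :=
  (d1 (d1 N) x * (d2 N x) ^ 2 - 2 * d2 (d1 N) x * d1 N x * d2 N x
   + d2 (d2 N) x * (d1 N x) ^ 2) / (enorm (grad N x)) ^ 3.

Definition sphere_pos_curv (N : R2 -> R) : Prop :=
  forall x, N x = 1 -> grad N x <> (0, 0) /\ 0 < curv N x.

Definition strictly_convex_norm (N : R2 -> R) : Prop :=
  forall x y, N x = 1 -> N y = 1 -> x <> y -> N (vscal (/2) (vadd x y)) < 1.

Definition is_inf (S : R -> Prop) (m : R) : Prop :=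
  (forall s, S s -> m <= s) /\ (forall m', (forall s, S s -> m' <= s) -> m' <= m).

Definition is_interval (I : R -> Prop) : Prop :=
  forall a b c, I a -> I c -> a <= b -> b <= c -> I b.

(* gamma is N-self-contracted on I (gamma need not be continuous) *)
Definition self_contracted (N : R2 -> R) (I : R -> Prop) (gamma : R -> R2) : Prop :=
  forall a b, I a -> I b -> a <= b ->
    forall t1 t2, a <= t1 -> t1 <= t2 -> t2 <= b ->
      N (vsub (gamma t2) (gamma b)) <= N (vsub (gamma t1) (gamma b)).

(* Main.v *)
Require Import Defs.
From Stdlib Require Import Reals Lra Psatz.
From Coquelicot Require Import Coquelicot.
Open Scope R_scope.

Lemma ip_pos (v : R2) : v <> (0,0) -> 0 < ip v v.
Proof.
  destruct v as [x y]; unfold ip; simpl; intro H.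
  destruct (Req_dec x 0) as [Hx|Hx]; destruct (Req_dec y 0) as [Hy|Hy].
  - subst; exfalso; apply H; reflexivity.
  - subst. nra.
  - nra.
  - nra.
Qed.

Lemma unit_vec (v : R2) : v <> (0,0) ->
  ip (vscal (/ enorm v) v) (vscal (/ enorm v) v) = 1.
Proof.
  intro H. pose proof (ip_pos v H) as Hp.
  assert (He : enorm v * enorm v = ip v v) by (unfold enorm; apply sqrt_sqrt; lra).
  assert (Hn : 0 < enorm v) by (unfold enorm; apply sqrt_lt_R0; lra).
  revert He Hn Hp. destruct v as [x y]; unfold ip, vscal; simpl.
  intros He Hn Hp.
  replace (/ enorm (x, y) * x * (/ enorm (x, y) * x) + / enorm (x, y) * y * (/ enorm (x, y) * y))
    with ((x*x+y*y) / (enorm (x,y) * enorm (x,y))) by (field; lra).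
  rewrite He. field. lra.
Qed.

Lemma final_alg (n e d : R2) (s c : R) : ip n n = 1 -> ip e e = 1 -> ip d d = 1 ->
  ip n e <= 0 -> ip n d <= - s -> 0 <= s -> 0 <= c -> s*s + c*c = 1 -> ip e d >= - c.
Proof.
  destruct n as [n1 n2], e as [ex ey], d as [dx dy]; unfold ip; simpl.
  intros Hn He Hd Hne Hnd Hs Hc Hsc.
  set (e1 := n1*ex + n2*ey). set (e2 := -n2*ex + n1*ey).
  set (d1 := n1*dx + n2*dy). set (d2 := -n2*dx + n1*dy).
  assert (Hed : ex*dx + ey*dy = e1*d1 + e2*d2).
  { unfold e1, e2, d1, d2.
    replace (ex*dx+ey*dy) with ((n1*n1+n2*n2)*(ex*dx+ey*dy)) by (rewrite Hn; ring). ring. }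
  assert (He2 : e1*e1 + e2*e2 = 1).
  { unfold e1, e2. rewrite <- He.
    replace (ex*ex+ey*ey) with ((n1*n1+n2*n2)*(ex*ex+ey*ey)) by (rewrite Hn; ring). ring. }
  assert (Hd2 : d1*d1 + d2*d2 = 1).
  { unfold d1, d2. rewrite <- Hd.
    replace (dx*dx+dy*dy) with ((n1*n1+n2*n2)*(dx*dx+dy*dy)) by (rewrite Hn; ring). ring. }
  fold e1 in Hne. fold d1 in Hnd.
  assert (H1 : 0 <= e1 * d1) by nra.
  assert (H2 : d1*d1 >= s*s) by nra.
  assert (H3 : d2*d2 <= c*c) by nra.
  assert (H4 : (e2*d2)*(e2*d2) <= c*c).
  { assert (e2*e2 <= 1) by nra.
    assert (0 <= d2*d2) by nra. nra. }
  assert (H5 : e2*d2 >= -c) by nra.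
  lra.
Qed.

Lemma deriv_nonpos (phi : R -> R) (l : R) :
  Ranalysis1.derivable_pt_lim phi 0 l ->
  (forall t, 0 < t <= 1 -> phi t <= phi 0) -> l <= 0.
Proof.
  intros Hd Hle. destruct (Rle_dec l 0) as [H|H]; [exact H|].
  exfalso. apply Rnot_le_lt in H.
  destruct (Hd (l/2) ltac:(lra)) as [del Hdel].
  set (t := Rmin (del/2) 1).
  assert (Ht0 : 0 < t) by (unfold t; apply Rmin_glb_lt; [destruct del; simpl; lra|lra]).
  assert (Ht1 : t <= 1) by (unfold t; apply Rmin_r).
  assert (Htd : t <= del/2) by (unfold t; apply Rmin_l).
  assert (Hdp : 0 < del) by (destruct del; simpl; lra).
  specialize (Hdel t ltac:(lra) ltac:(rewrite Rabs_right; lra)).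
  rewrite Rplus_0_l in Hdel.
  specialize (Hle t ltac:(lra)).
  assert (Hq : (phi t - phi 0) / t <= 0).
  { unfold Rdiv. assert (0 < / t) by (apply Rinv_0_lt_compat; lra). nra. }
  apply Rabs_def2 in Hdel. lra.
Qed.



Lemma loc_nonzero (x y : R) : (x,y) <> (0,0) ->
  locally_2d (fun u v => (u,v) <> (0,0)) x y.
Proof.
  intro H.
  destruct (Req_dec x 0) as [Hx|Hx].
  - assert (Hy : y <> 0) by (intro; subst; apply H; reflexivity).
    exists (mkposreal (Rabs y) (Rabs_pos_lt y Hy)). simpl. intros u v _ Hv E.
    injection E; intros; subst. rewrite Rminus_0_l, Rabs_Ropp in Hv. lra.
  - exists (mkposreal (Rabs x) (Rabs_pos_lt x Hx)). simpl. intros u v Hu _ E.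
    injection E; intros; subst. rewrite Rminus_0_l, Rabs_Ropp in Hu. lra.
Qed.

Lemma diff_N (N : R2 -> R) (hC2 : C2_off0 N) (x y : R) : (x,y) <> (0,0) ->
  differentiable_pt_lim (fun u v => N (u,v)) x y (Defs.d1 N (x,y)) (Defs.d2 N (x,y)).
Proof.
  intro H.
  apply filterdiff_differentiable_pt_lim.
  assert (HF := is_derive_filterdiff (fun u v => N (u,v)) x y
                   (fun u v => Defs.d1 N (u,v)) (Defs.d2 N (x,y))).
  eapply filterdiff_ext_lin; [apply HF|].
  - apply (proj1 (locally_2d_locally (fun u v => is_derive (fun z => N (z, v)) u (Defs.d1 N (u,v))) x y)).
    generalize (loc_nonzero x y H). apply locally_2d_impl. apply locally_2d_forall.
    intros u v Huv. apply Derive_correct. exact (proj1 (hC2 (u,v) Huv)).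
  - apply Derive_correct. exact (proj1 (proj2 (hC2 (x,y) H))).
  - destruct (hC2 (x,y) H) as (_&_&_&_&_&_&_&Hc1&_).
    eapply continuous_ext; [|exact Hc1].
    intros [a b]. reflexivity.
  - intros [a b]. simpl. reflexivity.
Qed.

Lemma support (N : R2 -> R) (hN : is_norm N) (hC2 : C2_off0 N) (p q : R2) :
  p <> (0,0) -> N p = 1 -> N q <= 1 ->
  Defs.d1 N p * (fst q - fst p) + Defs.d2 N p * (snd q - snd p) <= 0.
Proof.
  intros Hp HNp HNq.
  destruct hN as (Hpos & Hdef & Hhom & Htri).
  destruct p as [x y]. simpl.
  set (h1 := fst q - x). set (h2 := snd q - y).
  set (phi := fun t => N (x + t*h1, y + t*h2)).
  apply (deriv_nonpos phi).
  - unfold phi.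
    replace (Defs.d1 N (x, y) * h1 + Defs.d2 N (x, y) * h2)
      with (Defs.d1 N (x, y) * h1 + Defs.d2 N (x, y) * h2) by ring.
    apply (derivable_pt_lim_comp_2d (fun u v => N (u,v)) (fun t => x + t*h1) (fun t => y + t*h2)).
    + replace (x + 0*h1) with x by ring. replace (y + 0*h2) with y by ring.
      apply diff_N; assumption.
    + apply is_derive_Reals. auto_derive; [exact I| ring].
    + apply is_derive_Reals. auto_derive; [exact I| ring].
  - intros t Ht. unfold phi.
    replace (x + 0*h1, y + 0*h2) with (x,y) by (f_equal; ring).
    rewrite HNp.
    replace (x + t*h1, y + t*h2) with (vadd (vscal (1-t) (x,y)) (vscal t q))
      by (destruct q; unfold vadd, vscal, h1, h2; simpl; f_equal; ring).
    eapply Rle_trans; [apply Htri|].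
    rewrite !Hhom, HNp. rewrite (Rabs_right (1-t)) by lra. rewrite (Rabs_right t) by lra.
    nra.
Qed.

Lemma ip_scal_l k x y : ip (vscal k x) y = k * ip x y.
Proof. destruct x, y; unfold ip, vscal; simpl; ring. Qed.
Lemma ip_scal_r k x y : ip x (vscal k y) = k * ip x y.
Proof. destruct x, y; unfold ip, vscal; simpl; ring. Qed.

Lemma enorm_scal k v : 0 < k -> enorm (vscal k v) = k * enorm v.
Proof.
  intro Hk. unfold enorm. rewrite ip_scal_l, ip_scal_r.
  replace (k * (k * ip v v)) with ((k*k) * ip v v) by ring.
  destruct v as [a b]; unfold ip; simpl.
  rewrite sqrt_mult by nra. rewrite sqrt_square by lra. reflexivity.
Qed.

Lemma enorm_pos v : v <> (0,0) -> 0 < enorm v.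
Proof. intro H. unfold enorm. apply sqrt_lt_R0. apply ip_pos; auto. Qed.

Lemma vsub_neq a c : c <> a -> vsub a c <> (0,0).
Proof.
  destruct a as [a1 a2], c as [c1 c2]; unfold vsub; simpl. intros H E.
  injection E; intros. apply H. f_equal; lra.
Qed.

Theorem lemma3p1 (N : R2 -> R) (alpha0 : R) (I : R -> Prop) (gamma : R -> R2)
  (hN : is_norm N) (hC2 : C2_off0 N) (hcurv : sphere_pos_curv N)
  (hconv : strictly_convex_norm N)
  (ha0 : 0 < alpha0 <= PI / 2)
  (hsin : is_inf (fun v => exists x, N x = 1 /\ v = ip (nu N x) (vscal (/ enorm x) x))
                 (sin alpha0))
  (hI : is_interval I) (hgamma : self_contracted N I gamma) :
  forall s t u, I s -> I t -> I u -> s <= t -> t <= u ->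
    gamma t <> gamma s -> gamma u <> gamma s ->
    ip (vscal (/ enorm (vsub (gamma t) (gamma s))) (vsub (gamma t) (gamma s)))
       (vscal (/ enorm (vsub (gamma u) (gamma s))) (vsub (gamma u) (gamma s)))
    >= - cos alpha0.
Proof.
  intros s t u Is It Iu Hst Htu Hts Hus.
  assert (HSC := hgamma s u Is Iu (Rle_trans _ _ _ Hst Htu) s t (Rle_refl s) Hst Htu).
  set (a := gamma s) in *. set (b := gamma t) in *. set (c := gamma u) in *.
  pose proof hN as (Hpos & Hdef & Hhom & Htri).
  assert (Hac : vsub a c <> (0,0)) by (apply vsub_neq; exact Hus).
  assert (Hca : vsub c a <> (0,0)) by (apply vsub_neq; intro E; apply Hus; rewrite E; reflexivity).
  assert (Hba : vsub b a <> (0,0)) by (apply vsub_neq; intro E; apply Hts; rewrite E; reflexivity).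
  set (r := N (vsub a c)) in *.
  assert (Hr : 0 < r).
  { destruct (Hpos (vsub a c)) as [H|H]; [exact H|]. exfalso; apply Hac; apply Hdef; auto. }
  set (p := vscal (/ r) (vsub a c)).
  set (q := vscal (/ r) (vsub b c)).
  assert (HNp : N p = 1).
  { unfold p. rewrite Hhom, Rabs_right by (left; apply Rinv_0_lt_compat; lra). fold r. field. lra. }
  assert (HNq : N q <= 1).
  { unfold q. rewrite Hhom, Rabs_right by (left; apply Rinv_0_lt_compat; lra).
    apply (Rmult_le_reg_l r); [lra|]. field_simplify; lra. }
  assert (Hp0 : p <> (0,0)) by (intro E; rewrite E in HNp;
     rewrite <- (Rmult_0_l 0) in HNp; change (0*0, 0*0) with (vscal 0 (0,0)) in HNp;
     rewrite Hhom, Rabs_R0 in HNp; lra).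
  assert (Hsup := support N hN hC2 p q Hp0 HNp HNq).
  destruct (hcurv p HNp) as [Hg _].
  set (g := grad N p) in *.
  assert (Hgv : ip g (vsub b a) <= 0).
  { assert (E : ip g (vsub b a) = r * (Defs.d1 N p * (fst q - fst p) + Defs.d2 N p * (snd q - snd p))).
    { unfold g, grad, ip, q, p, vsub, vscal; simpl. field. lra. }
    rewrite E. nra. }
  set (n := nu N p).
  set (e := vscal (/ enorm (vsub b a)) (vsub b a)).
  set (d := vscal (/ enorm (vsub c a)) (vsub c a)).
  assert (Hnn : ip n n = 1) by (apply unit_vec; exact Hg).
  assert (Hee : ip e e = 1) by (apply unit_vec; exact Hba).
  assert (Hdd : ip d d = 1) by (apply unit_vec; exact Hca).
  pose proof (enorm_pos _ Hg) as Hgn.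
  pose proof (enorm_pos _ Hba) as Hban.
  pose proof (enorm_pos _ Hca) as Hcan.
  assert (Hne : ip n e <= 0).
  { unfold n, nu, e. fold g. rewrite ip_scal_l, ip_scal_r.
    assert (0 < / enorm g) by (apply Rinv_0_lt_compat; lra).
    assert (0 < / enorm (vsub b a)) by (apply Rinv_0_lt_compat; lra).
    rewrite <- Rmult_assoc.
    assert (0 < / enorm g * / enorm (vsub b a)) by (apply Rmult_lt_0_compat; auto).
    nra. }
  assert (Hnd : ip n d <= - sin alpha0).
  { destruct hsin as [Hinf _].
    assert (H := Hinf _ (ex_intro _ p (conj HNp eq_refl))).
    assert (Ep : vscal (/ enorm p) p = vscal (-1) d).
    { unfold p. rewrite enorm_scal by (apply Rinv_0_lt_compat; lra).
      assert (En : enorm (vsub a c) = enorm (vsub c a)).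
      { unfold enorm, ip, vsub; simpl. f_equal. ring. }
      rewrite En. unfold d, vscal, vsub; simpl. f_equal; field; (split; [change (enorm (vsub c a) <> 0); lra | lra]). }
    rewrite Ep, ip_scal_r in H. fold n in H. lra. }
  assert (Hs0 : 0 <= sin alpha0).
  { apply sin_ge_0; pose proof PI_RGT_0; lra. }
  assert (Hc0 : 0 <= cos alpha0).
  { apply cos_ge_0; pose proof PI_RGT_0; lra. }
  assert (Hsc : sin alpha0 * sin alpha0 + cos alpha0 * cos alpha0 = 1).
  { pose proof (sin2_cos2 alpha0) as H. unfold Rsqr in H. exact H. }
  exact (final_alg n e d (sin alpha0) (cos alpha0) Hnn Hee Hdd Hne Hnd Hs0 Hc0 Hsc).
Qed.
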